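(* Let $S(\mathbf{G}(V,E),\mathbf{\Sigma})$ be a constrained switching system with $\mathbf{\Sigma}\subset\mathbb{R}^{n\times n}$, nodes $V=\{v_1,\dots,v_{|V|}\}$, and let $\mathbf{\Sigma}_{\mathbf{G}}=\{A_{(v_i,v_j,\sigma)} : (v_i,v_j,\sigma)\in E\}$ be its Kronecker lift, where $A_{(v_i,v_j,\sigma)}=(\mathbf{e}(j)\mathbf{e}(i)^\top)\otimes A_\sigma\in\mathbb{R}^{n|V|\times n|V|}$. Let $\gamma>0$. There exists a symmetric $Q_{\mathbf{G}}\succ0$ in $\mathbb{R}^{n|V|\times n|V|}$ such that $$A_{(v,w,\sigma)}^\top Q_{\mathbf{G}}A_{(v,w,\sigma)}-\gamma^2Q_{\mathbf{G}}\preceq0\quad\text{for all } (v,w,\sigma)\in E$$ if and only if $S$ has a quadratic multinorm with value at most $\gamma$.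
   Context: An automaton $\mathbf{G}(V,E)$ is a strongly connected directed graph with finite node set $V$ and finite edge set $E$ of labelled edges $(v,w,\sigma)$, $\sigma$ indexing a matrix $A_\sigma\in\mathbf{\Sigma}$; $S(\mathbf{G},\mathbf{\Sigma})$ is the switching system $x_{t+1}=A_{\sigma(t)}x_t$ whose switching sequences are label sequences of paths in $\mathbf{G}$. $\mathbf{e}(k)$ is the $k$-th canonical basis vector of $\mathbb{R}^{|V|}$ and $\otimes$ the Kronecker product. A quadratic multinorm for $S$ is a family $\{|\cdot|_v : v\in V\}$ with $|x|_v=(x^\top Q_vx)^{1/2}$ for symmetric $Q_v\succ0$; its value is $\min\{\gamma : |A_\sigma x|_w\le\gamma|x|_v\ \forall x\in\mathbb{R}^n,\ \forall(v,w,\sigma)\in E\}$ (equivalently the least $\gamma$ with $A_\sigma^\top Q_wA_\sigma\preceq\gamma^2Q_v$ for all edges). *)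

(* Defs.v *)
From HB Require Import structures.
From mathcomp Require Import all_boot all_order all_algebra.
From mathcomp Require Export mxtens.
Set Implicit Arguments. Unset Strict Implicit. Unset Printing Implicit Defensive.
Import Order.TTheory GRing.Theory Num.Theory.
Local Open Scope ring_scope.

Definition qform (R : realFieldType) (k : nat) (M : 'M[R]_k) (x : 'cV[R]_k) : R :=
  (x^T *m M *m x) 0 0.

Definition symmetric_mx (R : realFieldType) (k : nat) (M : 'M[R]_k) : Prop :=
  M^T = M.

Definition posdef (R : realFieldType) (k : nat) (M : 'M[R]_k) : Prop :=
  symmetric_mx M /\ forall x : 'cV[R]_k, x != 0 -> 0 < qform M x.

Definition loewner_le (R : realFieldType) (k : nat) (M N : 'M[R]_k) : Prop :=
  forall x : 'cV[R]_k, qform M x <= qform N x.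

Definition evec (R : realFieldType) (N : nat) (k : 'I_N) : 'cV[R]_N := delta_mx k 0.

Definition strongly_connected (N m : nat) (E : {set 'I_N * 'I_N * 'I_m}) : Prop :=
  forall v w : 'I_N, connect (fun a b => [exists s : 'I_m, (a, b, s) \in E]) v w.

Definition kron_lift (R : realFieldType) (n N m : nat) (A : 'I_m -> 'M[R]_n)
  (e : 'I_N * 'I_N * 'I_m) : 'M[R]_(N * n) :=
  (evec R e.1.2 *m (evec R e.1.1)^T) *t A e.2.

Definition multinorm_bound (R : realFieldType) (n N m : nat) (A : 'I_m -> 'M[R]_n)
  (E : {set 'I_N * 'I_N * 'I_m}) (Q : 'I_N -> 'M[R]_n) (g : R) : Prop :=
  forall e, e \in E ->
    loewner_le ((A e.2)^T *m Q e.1.2 *m A e.2) (g ^+ 2 *: Q e.1.1).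

Definition quadratic_multinorm (R : realFieldType) (n N : nat) (Q : 'I_N -> 'M[R]_n) : Prop :=
  forall v, posdef (Q v).

Definition multinorm_value (R : realFieldType) (n N m : nat) (A : 'I_m -> 'M[R]_n)
  (E : {set 'I_N * 'I_N * 'I_m}) (Q : 'I_N -> 'M[R]_n) (g : R) : Prop :=
  0 <= g /\ multinorm_bound A E Q g /\
  forall g', 0 <= g' -> multinorm_bound A E Q g' -> g <= g'.

(* Main.v *)
Require Import Defs.
From HB Require Import structures.
From mathcomp Require Import all_boot all_order all_algebra.
From mathcomp Require Import mxtens reals.
Set Implicit Arguments. Unset Strict Implicit. Unset Printing Implicit Defensive.
Import Order.TTheory GRing.Theory Num.Theory.
Local Open Scope ring_scope.

Section Aux.
Variable R : realFieldType.

Lemma qform_mul k l (B : 'M[R]_(k,l)) (M : 'M[R]_k) x :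
  qform (B^T *m M *m B) x = qform M (B *m x).
Proof. by rewrite /qform trmx_mul !mulmxA. Qed.

Lemma qformBZ k (M Q : 'M[R]_k) c x :
  qform (M - c *: Q) x = qform M x - c * qform Q x.
Proof.
rewrite /qform mulmxBr mulmxBl -scalemxAr -scalemxAl.
by rewrite [LHS]mxE [X in _ + X]mxE [X in - X]mxE.
Qed.

Lemma qform0 k (x : 'cV[R]_k) : qform 0 x = 0.
Proof. by rewrite /qform mulmx0 mul0mx mxE. Qed.

Lemma qformZ k (M : 'M[R]_k) c x : qform (c *: M) x = c * qform M x.
Proof. by rewrite /qform -scalemxAr -scalemxAl mxE. Qed.

Lemma qform_sum k I (r : seq I) (F : I -> 'M[R]_k) x :
  qform (\sum_(i <- r) F i) x = \sum_(i <- r) qform (F i) x.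
Proof. by rewrite /qform mulmx_sumr mulmx_suml summxE. Qed.

Lemma qform0x k (M : 'M[R]_k) : qform M 0 = 0.
Proof. by rewrite /qform mulmx0 mxE. Qed.

Lemma sum_delta k (c : 'I_k) (F : 'I_k -> R) :
  \sum_(a < k) (c == a)%:R * F a = F c.
Proof.
rewrite (bigD1 c) //= eqxx mul1r big1 ?addr0 // => a /negPf.
by rewrite eq_sym => ->; rewrite mul0r.
Qed.

Variables (N n : nat).

Definition Pi (i : 'I_N) : 'M[R]_(N * n, n) :=
  \matrix_(k, a) (((mxtens_unindex k).1 == i)%:R * ((mxtens_unindex k).2 == a)%:R).

Lemma PiE i k1 k2 a : Pi i (mxtens_index (k1, k2)) a = (k1 == i)%:R * (k2 == a)%:R.
Proof. by rewrite mxE mxtens_indexK. Qed.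

Lemma sumPi i a (F : 'I_(N * n) -> R) :
  \sum_k Pi i k a * F k = F (mxtens_index (i, a)).
Proof.
rewrite (bigD1 (mxtens_index (i, a))) //= PiE !eqxx !mul1r big1 ?addr0 // => k.
case: (mxtens_indexP k) => k1 k2 hk; rewrite PiE.
case: eqP => [e1|_]; last by rewrite !mul0r.
case: eqP => [e2|_]; last by rewrite mulr0 mul0r.
by move: hk; rewrite e1 e2 eqxx.
Qed.

Lemma PiTPi i j : (Pi i)^T *m Pi j = if i == j then 1%:M else 0.
Proof.
apply/matrixP => a b.
rewrite !mxE; under eq_bigr => k _ do rewrite mxE.
rewrite sumPi PiE.
by case: (i == j); rewrite !mxE // ?mul1r ?mul0r // eq_sym.
Qed.

Lemma PiA w p (B : 'M[R]_(n, p)) k1 k2 b :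
  (Pi w *m B) (mxtens_index (k1, k2)) b = (k1 == w)%:R * B k2 b.
Proof.
rewrite mxE; under eq_bigr => a _ do rewrite PiE -mulrA.
by rewrite -mulr_sumr sum_delta.
Qed.

Lemma APiT v p (C : 'M[R]_(p, n)) a l1 l2 :
  (C *m (Pi v)^T) a (mxtens_index (l1, l2)) = (l1 == v)%:R * C a l2.
Proof.
rewrite mxE; under eq_bigr => b _ do rewrite mxE PiE mulrCA (mulrC (C a b)).
by rewrite -mulr_sumr sum_delta.
Qed.

Lemma sumPiPiT : \sum_i Pi i *m (Pi i)^T = 1%:M.
Proof.
apply/matrixP => k l.
case: (mxtens_indexP k) => k1 k2; case: (mxtens_indexP l) => l1 l2.
rewrite summxE; under eq_bigr => i _ do rewrite PiA mxE PiE.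
rewrite sum_delta mxE (inj_eq (can_inj (@mxtens_indexK _ _))) xpair_eqE.
by rewrite [l1 == k1]eq_sym [l2 == k2]eq_sym; case: (k1 == l1); case: (k2 == l2);
  rewrite ?mulr1 ?mulr0 ?mul0r.
Qed.

End Aux.
Arguments Pi {R N n} i.

Lemma kronPi (R : realFieldType) (n N m : nat) (A : 'I_m -> 'M[R]_n) e :
  kron_lift A e = @Pi R N n e.1.2 *m A e.2 *m (@Pi R N n e.1.1)^T.
Proof.
apply/matrixP => k l.
case: (mxtens_indexP k) => k1 k2; case: (mxtens_indexP l) => l1 l2.
rewrite /kron_lift tensmxE -mulmxA PiA APiT mxE big_ord1 !mxE !eqxx !andbT.
by rewrite mulrA.
Qed.

Lemma qform_ge0 (R : realFieldType) k (M : 'M[R]_k) x : posdef M -> 0 <= qform M x.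
Proof.
case=> _ hM; have [->|/hM/ltW //] := eqVneq x 0; by rewrite qform0x.
Qed.

Lemma qform_PiT (R : realFieldType) N n (M : 'M[R]_n) (i : 'I_N) x :
  qform (@Pi R N n i *m M *m (Pi i)^T) x = qform M ((Pi i)^T *m x).
Proof. by rewrite -[X in qform (X *m _ *m _)](trmxK (Pi i)) qform_mul. Qed.

From mathcomp Require Import classical_sets lra.
Unset Implicit Arguments.

Theorem proposition3p14 (R : realType) (n N m : nat) (A : 'I_m -> 'M[R]_n)
  (E : {set 'I_N * 'I_N * 'I_m}) (gamma : R) :
  strongly_connected E -> 0 < gamma ->
  (exists QG : 'M[R]_(N * n), posdef QG /\
     forall e, e \in E ->
       loewner_le ((kron_lift A e)^T *m QG *m kron_lift A e - gamma ^+ 2 *: QG) 0)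
  <->
  (exists Q : 'I_N -> 'M[R]_n, quadratic_multinorm Q /\
     exists g, multinorm_value A E Q g /\ g <= gamma).
Proof.
move=> _ gpos; split.
- case=> QG [[symQ posQ] HQ].
  pose Q := fun i => (@Pi R N n i)^T *m QG *m Pi i.
  have qQ i y : qform (Q i) y = qform QG (Pi i *m y) by rewrite qform_mul.
  have Qpd : quadratic_multinorm Q.
    move=> i; split.
      by rewrite /symmetric_mx /Q !trmx_mul trmxK symQ mulmxA.
    move=> y y0; rewrite qQ; apply: posQ; apply: contra y0 => /eqP h.
    have : (Pi i)^T *m (Pi i *m y) = y by rewrite mulmxA PiTPi eqxx mul1mx.
    by rewrite h mulmx0 => <-.
  have kP e y : kron_lift A e *m (Pi e.1.1 *m y) = Pi e.1.2 *m (A e.2 *m y).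
    by rewrite kronPi -!mulmxA (mulmxA (Pi e.1.1)^T) PiTPi eqxx mul1mx.
  have bnd e : e \in E -> forall y,
      qform ((A e.2)^T *m Q e.1.2 *m A e.2) y <= gamma ^+ 2 * qform (Q e.1.1) y.
    move=> eE y; have := HQ e eE (Pi e.1.1 *m y).
    rewrite qformBZ qform0 qform_mul subr_le0 kP.
    by rewrite qform_mul !qQ.
  exists Q; split => //.
  pose S := [set g : R | 0 <= g /\ multinorm_bound A E Q g]%classic.
  have Sg : S gamma.
    split; first exact: ltW.
    by move=> e eE y; rewrite qformZ; apply: bnd.
  have neS : nonempty S by exists gamma.
  have lbS : has_lbound S by exists 0 => g [].
  have g0ge : 0 <= inf S by apply: lb_le_inf => // g [].
  have infle g : S g -> inf S <= g by move=> Sg'; apply: (ge_inf lbS).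
  exists (inf S); split; last exact: infle.
  split => //; split; last by move=> g' g'0 hg'; apply: infle.
  move=> e eE y; rewrite qformZ.
  set a := qform _ y; set b := qform (Q e.1.1) y.
  have hb : 0 <= b by apply: qform_ge0.
  have hS g : S g -> a <= g ^+ 2 * b.
    by case=> _ /(_ e eE y); rewrite qformZ.
  rewrite leNgt; apply/negP => hlt.
  set g0 := inf S in g0ge infle hlt.
  have ha := hS _ Sg.
  have bpos : 0 < b.
    rewrite lt_neqAle hb andbT; apply/eqP => b0.
    by move: hlt ha; rewrite -b0 !mulr0 => h1 h2; move: (lt_le_trans h1 h2); rewrite ltxx.
  set d := a - g0 ^+ 2 * b.
  have dpos : 0 < d by rewrite subr_gt0.
  set k := (2 * g0 + 1) * b + 1.
  have kpos : 0 < k by rewrite ltr_wpDl // mulr_ge0 // addr_ge0 // mulr_ge0.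
  set eps := d / (k + d).
  have kd : 0 < k + d by rewrite addr_gt0.
  have epspos : 0 < eps by rewrite divr_gt0.
  have epsk : eps * (k + d) = d by rewrite /eps mulfVK // gt_eqF.
  have eps1 : eps < 1 by rewrite /eps ltr_pdivrMr // mul1r ltrDr.
  have [g Sg1 glt] : exists2 g, S g & g < g0 + eps.
    by apply: inf_lt; [exists gamma | rewrite ltrDl].
  have g0' : 0 <= g by case: Sg1.
  have := hS _ Sg1.
  have : g ^+ 2 * b <= (g0 + eps) ^+ 2 * b.
    have h : g ^+ 2 <= (g0 + eps) ^+ 2 by nra.
    by rewrite ler_wpM2r.
  have : (g0 + eps) ^+ 2 * b < a.
    have e1 : (g0 + eps) ^+ 2 * b <= g0 ^+ 2 * b + eps * ((2 * g0 + 1) * b).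
      have : eps * eps * b <= eps * b by rewrite ler_wpM2r // ler_piMr // ltW.
      rewrite !expr2. nra.
    have : eps * ((2 * g0 + 1) * b) < d.
      rewrite -[X in _ < X]epsk /k; nra.
    rewrite /d in e1 *; lra.
  lra.
- case=> Q [Qpd [g [[g0 [gb gmin]] gle]]].
  pose QG := \sum_i @Pi R N n i *m Q i *m (Pi i)^T.
  have qQG x : qform QG x = \sum_i qform (Q i) ((Pi i)^T *m x).
    by rewrite /QG qform_sum; apply: eq_bigr => i _; rewrite qform_PiT.
  exists QG; split.
    split.
      rewrite /symmetric_mx /QG; apply/matrixP => a b; rewrite mxE !summxE.
      apply: eq_bigr => i _.
      have -> : (Pi i *m Q i *m (Pi i)^T) b a = (Pi i *m Q i *m (Pi i)^T)^T a b by rewrite [RHS]mxE.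
      by rewrite !trmx_mul trmxK (proj1 (Qpd i)) mulmxA.
    move=> x x0; rewrite qQG.
    have [i hi|h0] := pickP (fun i => (@Pi R N n i)^T *m x != 0).
      rewrite (bigD1 i) //=; apply: (lt_le_trans ((proj2 (Qpd i)) _ hi)).
      by rewrite lerDl sumr_ge0 // => j _; apply: qform_ge0.
    exfalso; move/negP: x0; apply; apply/eqP.
    rewrite -[x]mul1mx -sumPiPiT mulmx_suml big1 // => i _.
    by move/negbFE/eqP: (h0 i) => h; rewrite -mulmxA h mulmx0.
  move=> e eE x; rewrite qform0 qformBZ subr_le0 qform_mul !qQG.
  have kT j : (Pi j)^T *m (kron_lift A e *m x) =
      if j == e.1.2 then A e.2 *m ((Pi e.1.1)^T *m x) else 0.
    rewrite kronPi !mulmxA PiTPi; case: (j == e.1.2) => /=; last by rewrite !mul0mx.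
    by rewrite mul1mx.
  rewrite [X in X <= _](bigD1 e.1.2) //= big1 ?addr0; last first.
    by move=> j /negPf hj; rewrite kT hj qform0x.
  rewrite kT eqxx -qform_mul.
  apply: (le_trans (gb e eE _)); rewrite qformZ.
  rewrite (bigD1 e.1.1) //= mulrDr.
  have q0 : 0 <= qform (Q e.1.1) ((Pi e.1.1)^T *m x) by apply: qform_ge0.
  have r0 : 0 <= gamma ^+ 2 * \sum_(i | i != e.1.1) qform (Q i) ((Pi i)^T *m x).
    by rewrite mulr_ge0 ?sqr_ge0 // sumr_ge0 // => j _; apply: qform_ge0.
  have gg : g ^+ 2 <= gamma ^+ 2 by rewrite ler_pXn2r // ?nnegrE ltW.
  have := ler_wpM2r q0 gg; lra.
Qed.
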